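(* Let $\mu$ be a positive even integer, $h>0$, $t\ge 0$, and for $K\in\mathbb{N}$ and $k\in\{1,\dots,K-1\}$ define $$F_\mu(t,h,k,K)=\left(\frac{k!\,(K-k)!}{\prod_{\kappa=1}^K(K-k+\kappa)+(K+1)^K\left(\frac{t}{h}\right)^K}\right)^{\mu}.$$ Then for every $K\in\mathbb{N}$ and every $k=1,\dots,K-1$, $$F_\mu(t,h,k,K)\le F_\mu(t,h,K-1,K).$$ *)

(* Defs.v *)
From mathcomp Require Import all_boot all_order all_algebra.
From mathcomp Require Import reals.
Set Implicit Arguments. Unset Strict Implicit. Unset Printing Implicit Defensive.
Import Order.TTheory GRing.Theory Num.Theory.
Local Open Scope ring_scope.

Definition F (R : realType) (mu : nat) (t h : R) (k K : nat) : R :=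
  ((k`!)%:R * ((K - k)`!)%:R /
     ((\prod_(1 <= kappa < K.+1) (K - k + kappa)%N)%:R
      + (K.+1)%:R ^+ K * (t / h) ^+ K)) ^+ mu.

(* Main.v *)
Require Import Defs.
From mathcomp Require Import all_boot all_order all_algebra.
From mathcomp Require Import reals.
From mathcomp Require Import zify ring.
Import Order.TTheory GRing.Theory Num.Theory.
Local Open Scope ring_scope.
Local Open Scope nat_scope.

Lemma prod_fact (m n : nat) :
  ((\prod_(1 <= i < n.+1) (m + i)) * m`! = (m + n)`!)%N.
Proof.
elim: n => [|n IH]; first by rewrite big_geq // mul1n addn0.
by rewrite big_nat_recr //= mulnAC IH addnS factS mulnC.
Qed.

Lemma ineq1 (k j : nat) : (0 < k)%N -> (0 < j)%N ->
  (k`! * j`! <= (k + j).-1`!)%N.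
Proof.
move=> hk; case: j => // j _; elim: j => [|j IH].
  by rewrite addn1 /= (fact0 : 1`! = 1%N) muln1.
rewrite factS mulnCA.
have -> : (k + j.+2).-1 = (k + j.+1).-1.+1 by lia.
rewrite factS leq_mul //; lia.
Qed.

Lemma ineq2 (k j : nat) : (0 < k)%N -> (0 < j)%N ->
  (k`! * j`! * j`! * (k + j).+1`! <= (k + j).-1`! * (k + j + j)`!)%N.
Proof.
move=> hk; case: j => // j _; elim: j => [|j IH].
  have -> : (k + 1).-1 = k by lia.
  rewrite (fact0 : 1`! = 1%N) !muln1; have -> : (k + 1 + 1 = (k + 1).+1)%N by lia. by [].
have e1 : (k + j.+2).+1`! = (k + j.+2).+1 * (k + j.+1).+1`!.
  by rewrite [LHS]factS addnS.
have e2 : (k + j.+2).-1`! = (k + j.+1) * (k + j.+1).-1`!.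
  have -> : (k + j.+2).-1 = (k + j.+1).-1.+1 by lia.
  have E : (k + j.+1).-1.+1 = k + j.+1 by lia.
  by rewrite factS E.
have e3 : (k + j.+2 + j.+2)`! = (k + j.+1 + j.+1).+2 * (k + j.+1 + j.+1).+1 * (k + j.+1 + j.+1)`!.
  by rewrite -mulnA -!factS; congr (_`!); lia.
rewrite e1 e2 e3 (factS j.+1).
set A := k`!. set B := j.+1`!. set C := (k + j.+1).+1`!.
set D := (k + j.+1).-1`!. set E := (k + j.+1 + j.+1)`!.
have h1 : ((j.+2 * j.+2) * (k + j.+2).+1 <= (k + j.+1) * ((k + j.+1 + j.+1).+2 * (k + j.+1 + j.+1).+1))%N.
  by nia.
have H := leq_mul h1 IH.
apply: (leq_trans _ (leq_trans H _)).
  by apply: eq_leq; rewrite /A /B /C; ring.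
by apply: eq_leq; rewrite /D /E; ring.
Qed.

Local Open Scope ring_scope.

Theorem proposition1 (R : realType) (mu : nat) (t h : R) :
  (0 < mu)%N -> ~~ odd mu -> 0 < h -> 0 <= t ->
  forall K k : nat, (1 <= k)%N -> (k <= K - 1)%N ->
    F mu t h k K <= F mu t h (K - 1) K.
Proof.
move=> mu0 _ h0 t0 K k k1 kK.
have [j j0 ->] : exists2 j, (0 < j)%N & K = (k + j)%N by exists (K - k)%N; lia.
rewrite /F.
have -> : (k + j - (k + j - 1))%N = 1%N by lia.
have -> : (k + j - k)%N = j by lia.
set C := (_ ^+ _ * _).
have C0 : 0 <= C by rewrite /C mulr_ge0 // exprn_ge0 // divr_ge0 // ltW.
set P1 := (\prod_(1 <= i < (k+j).+1) (j + i))%N.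
set P2 := (\prod_(1 <= i < (k+j).+1) (1 + i))%N.
have hP1 : (P1 * j`! = (k + j + j)`!)%N by rewrite /P1 prod_fact; congr (_`!); lia.
have hP2 : (P2 = (k + j).+1`!)%N by have := prod_fact 1 (k + j); rewrite (_ : 1`! = 1)%N // muln1 add1n.
have P1pos : (0 < P1)%N by apply: prodn_gt0 => i; lia.
have P2pos : (0 < P2)%N by rewrite hP2 fact_gt0.
rewrite ler_pXn2r // ?nnegrE; first last.
- by apply: divr_ge0; [apply: mulr_ge0 | apply: addr_ge0].
- by apply: divr_ge0; [apply: mulr_ge0 | apply: addr_ge0].
have d1 : 0 < P1%:R + C :> R by rewrite ltr_wpDr // ltr0n.
have d2 : 0 < P2%:R + C :> R by rewrite ltr_wpDr // ltr0n.
rewrite ler_pdivrMr // mulrAC ler_pdivlMr // -!natrM.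
have i1 : (k`! * j`! <= (k + j - 1)`! * 1`!)%N.
  by rewrite (fact0 : 1`! = 1%N) muln1; have := ineq1 _ _ k1 j0; rewrite subn1.
have i2 : (k`! * j`! * P2 <= (k + j - 1)`! * 1`! * P1)%N.
  rewrite -(leq_pmul2r (fact_gt0 j)) hP2 (_ : 1`! = 1)%N // muln1 -[X in (_ <= X)%N]mulnA hP1 subn1.
  apply: leq_trans (ineq2 _ _ k1 j0); apply: eq_leq; ring.
rewrite !mulrDr -!natrM lerD // ?ler_nat //.
by rewrite -![_ * C]mulrC ler_wpM2l // ler_nat.
Qed.
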